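(* Assume $\Sigma$ is already in a special coordinate basis (SCB) as in the context, with state $x=(x_a,x_b,x_c,x_d)$. Then there exists a nonsingular matrix $T_d\in\mathbb R^{n_d\times n_d}$ such that, with $T_s=\mathrm{diag}(I_{n_a},I_{n_b},I_{n_c},T_d)$ and the state transformation $x=T_s\bar x$, the transformed system is again in SCB (with the same $C_d$, $B_d$, $q_1,\dots,q_{m_d}$) and its matrix $F_{dd}$ has the following structure: partitioning the columns of $F_{dd}$ into consecutive blocks of widths $q_1,\dots,q_{m_d}$ and denoting by $f_{i,j,k}$ the entry of row $i$ in the $k$-th column of block $j$, one has $f_{i,j,k}=0$ whenever $j\ge i$ or $k=1$. Moreover, $C_dT_d=C_d$ and $T_d^{-1}B_d=B_d$.
   Context: Notation: for an integer $k\ge 1$, $J_k\in\mathbb R^{k\times k}$ is the matrix with ones on the first superdiagonal and zeros elsewhere, $B_k=[0\ \cdots\ 0\ 1]^\top\in\mathbb R^{k}$, $C_k=[1\ 0\ \cdots\ 0]\in\mathbb R^{1\times k}$, and $\mathrm{diag}(\cdot)$ denotes a (block) diagonal matrix. Consider the linear time-invariant system $\Sigma$: $\dot x=Ax+Bu$, $y=Cx+Du$, with $x\in\mathbb R^n$, $u\in\mathbb R^m$, $y\in\mathbb R^p$, $\operatorname{rank}D=m_0$, and with $[B^\top\ D^\top]$ and $[C\ D]$ of full rank. Special coordinate basis (SCB): $\Sigma$ is in SCB if its state, input and output are partitioned as $x=(x_a,x_b,x_c,x_d)$ with $x_a\in\mathbb R^{n_a},x_b\in\mathbb R^{n_b},x_c\in\mathbb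 R^{n_c},x_d\in\mathbb R^{n_d}$, $u=(u_0,u_d,u_c)$ with $u_0\in\mathbb R^{m_0},u_d\in\mathbb R^{m_d},u_c\in\mathbb R^{m_c}$, $y=(y_0,y_d,y_b)$ with $y_0\in\mathbb R^{m_0},y_d\in\mathbb R^{m_d},y_b\in\mathbb R^{p_b}$, such that $y_0=C_{0a}x_a+C_{0b}x_b+C_{0c}x_c+C_{0d}x_d+u_0$, $y_d=C_dx_d$, $y_b=C_bx_b$, $\dot x_a=A_ax_a+H_{ab}C_bx_b+H_{ad}C_dx_d+B_{0a}y_0$, $\dot x_b=A_bx_b+H_{bd}C_dx_d+B_{0b}y_0$, $\dot x_c=B_cF_{ca}x_a+H_{cb}C_bx_b+A_cx_c+H_{cd}C_dx_d+B_{0c}y_0+B_cu_c$, $\dot x_d=B_dF_{da}x_a+B_dF_{db}x_b+B_dF_{dc}x_c+A_dx_d+B_{0d}y_0+B_du_d$, with constant real matrices of appropriate dimensions, where $A_b=\mathrm{diag}(J_{l_1},\dots,J_{l_{p_b}})+H_{bb}C_b$, $C_b=\mathrm{diag}(C_{l_1},\dots,C_{l_{p_b}})$ for positive integers $l_i$ with $\sum_i l_i=n_b$; $B_d=\mathrm{diag}(B_{q_1},\dots,B_{q_{m_d}})$, $C_d=\mathrm{diag}(C_{q_1},\dots,C_{q_{m_d}})$ for integers $q_1\ge q_2\ge\dots\ge q_{m_d}\ge 1$ with $\sum_i q_i=n_d$; and $A_d=A_d^\star+B_dF_{dd}+H_{dd}C_d$ with $A_d^\star=\mathrm{diag}(J_{q_1},\dots,J_{q_{m_d}})$,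 $F_{dd}\in\mathbb R^{m_d\times n_d}$, $H_{dd}\in\mathbb R^{n_d\times m_d}$. *)

(* Defs.v *)
From mathcomp Require Import all_boot all_order all_algebra.
Set Implicit Arguments. Unset Strict Implicit. Unset Printing Implicit Defensive.
Import Order.TTheory GRing.Theory Num.Theory.
Local Open Scope ring_scope.

Section SCB.
Variable R : nzRingType.

Definition Jmx (k : nat) : 'M[R]_k := \matrix_(i, j) ((j : nat) == i.+1)%:R.

Definition bstart (r : nat) (s : 'I_r -> nat) (i : 'I_r) : nat :=
  (\sum_(j < r | (j < i)%N) s j)%N.

Definition Jblk (r : nat) (s : 'I_r -> nat) : 'M[R]_(\sum_i s i) :=
  \mxdiag_(i < r) Jmx (s i).

(* diag(B_{s_1}, ..., B_{s_r}) with B_k = [0 ... 0 1]^T, written entrywise: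
   entry (row c, column i) is 1 iff c is the last index of block i. *)
Definition Bblk (r : nat) (s : 'I_r -> nat) : 'M[R]_(\sum_i s i, r) :=
  \matrix_(c, i) (((c : nat).+1 == bstart s i + s i)%N)%:R.

(* diag(C_{s_1}, ..., C_{s_r}) with C_k = [1 0 ... 0], written entrywise:
   entry (row i, column c) is 1 iff c is the first index of block i. *)
Definition Cblk (r : nat) (s : 'I_r -> nat) : 'M[R]_(r, \sum_i s i) :=
  \matrix_(i, c) (((c : nat) == bstart s i)%N)%:R.

(* The free data of a system in special coordinate basis.
   x = (x_a, x_b, x_c, x_d), u = (u_0, u_d, u_c), y = (y_0, y_d, y_b),
   n_b = sum_i l_i, n_d = sum_i q_i. *)
Record scb_data (na nc m0 mc pb md : nat) (l : 'I_pb -> nat) (q : 'I_md -> nat)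
  := SCBData {
  Aa : 'M[R]_na; Hab : 'M[R]_(na, pb); Had : 'M[R]_(na, md); B0a : 'M[R]_(na, m0);
  Hbb : 'M[R]_(\sum_i l i, pb); Hbd : 'M[R]_(\sum_i l i, md);
  B0b : 'M[R]_(\sum_i l i, m0);
  Fca : 'M[R]_(mc, na); Hcb : 'M[R]_(nc, pb); Ac : 'M[R]_nc; Hcd : 'M[R]_(nc, md);
  B0c : 'M[R]_(nc, m0); Bc : 'M[R]_(nc, mc);
  Fda : 'M[R]_(md, na); Fdb : 'M[R]_(md, \sum_i l i); Fdc : 'M[R]_(md, nc);
  Fdd : 'M[R]_(md, \sum_i q i); Hdd : 'M[R]_(\sum_i q i, md);
  B0d : 'M[R]_(\sum_i q i, m0);
  C0a : 'M[R]_(m0, na); C0b : 'M[R]_(m0, \sum_i l i); C0c : 'M[R]_(m0, nc);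
  C0d : 'M[R]_(m0, \sum_i q i) }.

Definition col3 (a b c : nat) (xa : 'cV[R]_a) (xb : 'cV[R]_b) (xc : 'cV[R]_c)
  : 'cV[R]_(a + b + c) := col_mx (col_mx xa xb) xc.
Definition col4 (a b c d : nat) (xa : 'cV[R]_a) (xb : 'cV[R]_b) (xc : 'cV[R]_c)
  (xd : 'cV[R]_d) : 'cV[R]_(a + b + c + d) := col_mx (col3 xa xb xc) xd.

(* The system (A, B, C, D) (dx/dt = A x + B u, y = C x + D u) is in SCB with
   data P: the defining equations of the SCB hold for all x and u. *)
Definition in_SCB (na nc m0 mc pb md : nat) (l : 'I_pb -> nat) (q : 'I_md -> nat)
  (A : 'M[R]_(na + \sum_i l i + nc + \sum_i q i))
  (B : 'M[R]_(na + \sum_i l i + nc + \sum_i q i, m0 + md + mc))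
  (C : 'M[R]_(m0 + md + pb, na + \sum_i l i + nc + \sum_i q i))
  (D : 'M[R]_(m0 + md + pb, m0 + md + mc))
  (P : scb_data na nc m0 mc l q) : Prop :=
  let Cb := Cblk l in
  let Cd := Cblk q in
  let Bd := Bblk q in
  let Ab := Jblk l + Hbb P *m Cb in
  let Ad := Jblk q + Bd *m Fdd P + Hdd P *m Cd in
  forall (xa : 'cV[R]_na) (xb : 'cV[R]_(\sum_i l i)) (xc : 'cV[R]_nc)
         (xd : 'cV[R]_(\sum_i q i))
         (u0 : 'cV[R]_m0) (ud : 'cV[R]_md) (uc : 'cV[R]_mc),
  let x := col4 xa xb xc xd in
  let u := col3 u0 ud uc in
  let y0 := C0a P *m xa + C0b P *m xb + C0c P *m xc + C0d P *m xd + u0 in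
  C *m x + D *m u = col3 y0 (Cd *m xd) (Cb *m xb) /\
  A *m x + B *m u =
    col4 (Aa P *m xa + Hab P *m (Cb *m xb) + Had P *m (Cd *m xd) + B0a P *m y0)
         (Ab *m xb + Hbd P *m (Cd *m xd) + B0b P *m y0)
         (Bc P *m (Fca P *m xa) + Hcb P *m (Cb *m xb) + Ac P *m xc
            + Hcd P *m (Cd *m xd) + B0c P *m y0 + Bc P *m uc)
         (Bd *m (Fda P *m xa) + Bd *m (Fdb P *m xb) + Bd *m (Fdc P *m xc)
            + Ad *m xd + B0d P *m y0 + Bd *m ud).

Definition Ts_mx (na nb nc nd : nat) (Td : 'M[R]_nd) : 'M[R]_(na + nb + nc + nd) :=
  block_mx (block_mx (block_mx (1%:M : 'M[R]_na) 0 0 (1%:M : 'M[R]_nb))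
                     0 0 (1%:M : 'M[R]_nc)) 0 0 Td.

(* Structure of F_dd: entry f_{i,j,k} (row i, k-th column of column block j)
   vanishes whenever j >= i or k = 1 (0-based indices below). *)
Definition Fdd_structured (md : nat) (q : 'I_md -> nat) (F : 'M[R]_(md, \sum_i q i))
  : Prop :=
  forall (i j : 'I_md) (c : 'I_(\sum_i q i)),
    (bstart q j <= c < bstart q j + q j)%N ->
    ((j >= i)%N \/ (c : nat) = bstart q j) -> F i c = 0.

End SCB.

(* Main.v *)
Require Import Defs.
From mathcomp Require Import all_boot all_order all_algebra.
From mathcomp Require Import zify.
Set Implicit Arguments. Unset Strict Implicit. Unset Printing Implicit Defensive.
Import GRing.Theory Num.Theory.
Local Open Scope ring_scope.


Section Idx.
Variables (md : nat) (q : 'I_md -> nat).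
Hypothesis qpos : forall i, (0 < q i)%N.
Local Notation n := (\sum_i q i)%N.

Definition s1 (c : 'I_n) : 'I_md := @tagnat.sig1 md q c.
Definition s2 (c : 'I_n) : nat := @tagnat.sig2 md q c.

Lemma s2lt c : (s2 c < q (s1 c))%N.
Proof. exact: ltn_ord. Qed.

Lemma rectE (c : 'I_n) : (c : nat) = (bstart q (s1 c) + s2 c)%N.
Proof. exact: tagnat.rect. Qed.

Definition mk (j : 'I_md) (k : nat) (hk : (k < q j)%N) : 'I_n :=
  @tagnat.Rank md q j (Ordinal hk).

Lemma mk_val j k hk : (@mk j k hk : nat) = (bstart q j + k)%N.
Proof. by rewrite /mk tagnat.RankEsum. Qed.

Lemma s1_mk j k hk : s1 (@mk j k hk) = j.
Proof. exact: tagnat.Rank1K. Qed.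

Lemma s2_mk j k hk : s2 (@mk j k hk) = k.
Proof. by rewrite /s2 /mk tagnat.Rank2K. Qed.

Lemma eq_idx (c c' : 'I_n) : (c == c') = (s1 c == s1 c') && (s2 c == s2 c').
Proof.
rewrite -val_eqE /s1 /s2 -[c in LHS]tagnat.sig2K -[c' in LHS]tagnat.sig2K.
exact: tagnat.eq_Rank.
Qed.

Lemma s_range (j : 'I_md) (c : 'I_n) :
  (bstart q j <= c < bstart q j + q j)%N -> s1 c = j /\ s2 c = (c - bstart q j)%N.
Proof.
move=> /andP[h1 h2].
have hk : (c - bstart q j < q j)%N by lia.
have e : c = @mk j _ hk.
  by apply: ord_inj; rewrite mk_val; lia.
have E1 := congr1 s1 e; have E2 := congr1 s2 e.
by rewrite s1_mk in E1; rewrite s2_mk in E2.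
Qed.

Variable R : realFieldType.

Lemma JblkE (s t : 'I_n) :
  Jblk R q s t = ((s1 s == s1 t) && (s2 t == (s2 s).+1))%:R.
Proof.
rewrite /Jblk /mxdiag /mxblock !mxE /s1 /s2 /tagnat.sig1 /tagnat.sig2.
move: (tagnat.sig s) (tagnat.sig t) => [i a] [i' b] /=.
case: eqVneq => [e|ne]; last by rewrite mxE.
subst i'; rewrite conform_mx_id /Jmx mxE.
by case: (b == a.+1 :> nat).
Qed.

Lemma CblkE i (c : 'I_n) :
  Cblk R q i c = ((s1 c == i) && (s2 c == 0%N))%:R.
Proof.
rewrite /Cblk mxE.
suff -> : (c == bstart q i :> nat) = (s1 c == i) && (s2 c == 0%N) by [].
apply/idP/idP.
  move=> /eqP e.
  have [] := @s_range i c. by have := qpos i; rewrite e; lia.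
  by move=> -> ->; rewrite e subnn !eqxx.
by move=> /andP[/eqP e1 /eqP e2]; rewrite rectE e1 e2 addn0.
Qed.

Lemma BblkE (c : 'I_n) i :
  Bblk R q c i = ((s1 c == i) && ((s2 c).+1 == q i))%:R.
Proof.
rewrite /Bblk mxE.
suff -> : ((c : nat).+1 == bstart q i + q i)%N = (s1 c == i) && ((s2 c).+1 == q i) by [].
apply/idP/idP.
  move=> /eqP e.
  have := qpos i => hq.
  have [] := @s_range i c. apply/andP; split; lia.
  move=> -> ->; rewrite eqxx /=; apply/eqP. move: e hq. set cc := nat_of_ord c. lia.
move=> /andP[/eqP e1 /eqP e2]; rewrite rectE e1 -e2; apply/eqP; lia.
Qed.


Lemma sum_uniq (I : finType) (P : pred I) (f : I -> R) s0 :
  P s0 -> (forall s, P s -> s = s0) -> \sum_s (P s)%:R * f s = f s0.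
Proof.
move=> Ps0 uP; rewrite (bigD1 s0) //= Ps0 mul1r big1 ?addr0 // => s ne.
case Ps: (P s); last by rewrite mul0r.
by rewrite (uP _ Ps) eqxx in ne.
Qed.

Lemma sum_none (I : finType) (f : I -> R) (P : pred I) :
  (forall s, ~~ P s) -> \sum_s (P s)%:R * f s = 0.
Proof. by move=> nP; rewrite big1 // => s _; rewrite (negbTE (nP s)) mul0r. Qed.

Local Notation J := (Jblk R q).
Local Notation Bd := (Bblk R q).
Local Notation Cd := (Cblk R q).

Lemma mulJ_next p (M : 'M[R]_(n, p)) r j (h : ((s2 r).+1 < q (s1 r))%N) :
  (J *m M) r j = M (mk h) j.
Proof.
rewrite mxE (eq_bigr (fun s => ((s1 r == s1 s) && (s2 s == (s2 r).+1))%:R * M s j));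
  last by move=> s _; rewrite JblkE.
apply: (@sum_uniq _ (fun s => (s1 r == s1 s) && (s2 s == (s2 r).+1))).
  by rewrite s1_mk s2_mk !eqxx.
move=> s /andP[/eqP e1 /eqP e2]; apply/eqP; rewrite eq_idx s1_mk s2_mk e1 e2.
by rewrite !eqxx.
Qed.

Lemma mulJ_last p (M : 'M[R]_(n, p)) r j :
  (s2 r).+1 = q (s1 r) -> (J *m M) r j = 0.
Proof.
move=> hl; rewrite mxE (eq_bigr (fun s => ((s1 r == s1 s) && (s2 s == (s2 r).+1))%:R * M s j));
  last by move=> s _; rewrite JblkE.
apply: sum_none => s; apply/negP => /andP[/eqP e1 /eqP e2].
by have := s2lt s; rewrite e2 -e1 hl ltnn.
Qed.

Lemma mulJr_prev p (M : 'M[R]_(p, n)) r c (h : ((s2 c).-1 < q (s1 c))%N) :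
  (0 < s2 c)%N -> (M *m J) r c = M r (mk h).
Proof.
move=> hc; rewrite mxE (eq_bigr (fun s => ((s1 s == s1 c) && (s2 c == (s2 s).+1))%:R * M r s));
  last by move=> s _; rewrite JblkE mulrC.
apply: (@sum_uniq _ (fun s => (s1 s == s1 c) && (s2 c == (s2 s).+1))).
  by rewrite s1_mk s2_mk eqxx prednK // eqxx.
move=> s /andP[/eqP e1 /eqP e2]; apply/eqP; rewrite eq_idx s1_mk s2_mk e1 e2 /=.
by rewrite !eqxx.
Qed.

Lemma mulJr_start p (M : 'M[R]_(p, n)) r c :
  s2 c = 0%N -> (M *m J) r c = 0.
Proof.
move=> hc; rewrite mxE (eq_bigr (fun s => ((s1 s == s1 c) && (s2 c == (s2 s).+1))%:R * M r s));
  last by move=> s _; rewrite JblkE mulrC.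
by apply: sum_none => s; rewrite hc andbF.
Qed.

Lemma mulCdE p (X : 'M[R]_(n, p)) i t : (Cd *m X) i t = X (mk (qpos i)) t.
Proof.
rewrite mxE (eq_bigr (fun s => ((s1 s == i) && (s2 s == 0%N))%:R * X s t));
  last by move=> s _; rewrite CblkE.
apply: (@sum_uniq _ (fun s => (s1 s == i) && (s2 s == 0%N))).
  by rewrite s1_mk s2_mk !eqxx.
move=> s /andP[/eqP e1 /eqP e2]; apply/eqP; rewrite eq_idx s1_mk s2_mk e1 e2.
by rewrite !eqxx.
Qed.

Lemma mulCr p (X : 'M[R]_(p, md)) r t :
  (X *m Cd) r t = (s2 t == 0%N)%:R * X r (s1 t).
Proof.
rewrite mxE (eq_bigr (fun i => ((i == s1 t) && (s2 t == 0%N))%:R * X r i));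
  last by move=> i _; rewrite CblkE eq_sym mulrC.
case: (eqVneq (s2 t) 0%N) => h.
  rewrite mul1r; apply: (@sum_uniq _ (fun i => (i == s1 t) && true)).
    by rewrite !eqxx.
  by move=> i /andP[/eqP].
by rewrite mul0r; apply: sum_none => i; rewrite andbF.
Qed.

Lemma mulB p (Y : 'M[R]_(md, p)) r t :
  (Bd *m Y) r t = ((s2 r).+1 == q (s1 r))%:R * Y (s1 r) t.
Proof.
rewrite mxE (eq_bigr (fun i => ((i == s1 r) && ((s2 r).+1 == q (s1 r)))%:R * Y i t));
  last first.
  move=> i _; rewrite BblkE; congr (_%:R * _).
  by rewrite eq_sym; case: eqP => // ->.
case: (eqVneq (s2 r).+1 (q (s1 r))) => h.
  rewrite mul1r; apply: (@sum_uniq _ (fun i => (i == s1 r) && true)).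
    by rewrite !eqxx.
  by move=> i /andP[/eqP].
by rewrite mul0r; apply: sum_none => i; rewrite andbF.
Qed.

Lemma lastP i : ((q i).-1 < q i)%N.
Proof. by rewrite prednK. Qed.
Definition lastc i := mk (lastP i).

Lemma mulBr p (X : 'M[R]_(p, n)) r i : (X *m Bd) r i = X r (lastc i).
Proof.
rewrite mxE (eq_bigr (fun c => ((s1 c == i) && ((s2 c).+1 == q i))%:R * X r c));
  last by move=> c _; rewrite BblkE mulrC.
apply: (@sum_uniq _ (fun c => (s1 c == i) && ((s2 c).+1 == q i))).
  by rewrite /lastc s1_mk s2_mk eqxx (prednK (qpos i)) eqxx.
move=> c /andP[/eqP e1 /eqP e2]; apply/eqP; rewrite /lastc eq_idx s1_mk s2_mk e1 -e2.
by rewrite !eqxx.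
Qed.

End Idx.


Section Constr.
Variables (R : realFieldType) (md : nat) (q : 'I_md -> nat).
Hypothesis qpos : forall i, (0 < q i)%N.
Hypothesis qmono : forall i j : 'I_md, (i <= j)%N -> (q j <= q i)%N.
Local Notation n := (\sum_i q i)%N.
Variable F : 'M[R]_(md, n).
Local Notation J := (Jblk R q).
Local Notation Bd := (Bblk R q).
Local Notation Cd := (Cblk R q).
Local Notation s1 := (@s1 md q).
Local Notation s2 := (@s2 md q).

Definition Fle (j : 'I_md) : 'M[R]_(md, n) :=
  \matrix_(i, c) (if (i <= j)%N then F i c else 0).
Definition Aj (j : 'I_md) : 'M[R]_n := J + Bd *m Fle j.

Lemma addE m p (A B : 'M[R]_(m, p)) i j : (A + B) i j = A i j + B i j.
Proof. by rewrite mxE. Qed.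

Lemma inv (j : 'I_md) k r :
 ((s1 r == j) && (s2 r + k == (q j).-1)%N -> (Aj j ^+ k *m Bd) r j = 1) /\
 (~~ ((s1 r == j) && (s2 r + k == (q j).-1)%N) ->
  ~~ ((s1 r <= j)%N && ((q j).-1 < s2 r + k)%N) -> (Aj j ^+ k *m Bd) r j = 0).
Proof.
elim: k r => [|k IH] r.
  rewrite expr0 mul1mx (BblkE qpos).
  have hq := qpos j.
  have E : ((s2 r).+1 == q j) = (s2 r + 0 == (q j).-1)%N.
    by apply/eqP/eqP; lia.
  rewrite E; split; first by move=> ->.
  by move=> /negbTE ->.
rewrite exprS -mulmxE -mulmxA /Aj mulmxDl addE -mulmxA (mulB qpos).
set X := Aj j ^+ k *m Bd.
have hq := qpos j.
have hr := s2lt r.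
case: (ltnP (s2 r).+1 (q (s1 r))) => h.
  rewrite (mulJ_next _ _ h) (_ : ((s2 r).+1 == q (s1 r)) = false); last first.
    by apply/negbTE; rewrite neq_ltn h.
  rewrite mul0r addr0.
  have := IH (mk h); rewrite s1_mk s2_mk addSnnS; by [].
have hl : (s2 r).+1 = q (s1 r) by lia.
rewrite mulJ_last // add0r hl eqxx mul1r.
split.
  move=> /andP[/eqP e1 /eqP e2]; exfalso; move: e2 hl; rewrite e1; lia.
move=> _; case: (leqP (s1 r) j) => hj.
  have := qmono hj; rewrite -hl => hm /= hc; exfalso; move/negP: hc; apply; lia.
move=> _; rewrite mxE big1 // => c _; rewrite mxE.
by rewrite leqNgt hj mul0r.
Qed.


Definition Td : 'M[R]_n :=
  \matrix_(r, c) (Aj (s1 c) ^+ ((q (s1 c)).-1 - s2 c) *m Bd) r (s1 c).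

Lemma Td_diag c : Td c c = 1.
Proof.
rewrite mxE; have [h _] := inv (s1 c) ((q (s1 c)).-1 - s2 c) c.
apply: h; rewrite eqxx /=; apply/eqP; have := s2lt c; lia.
Qed.

Lemma Td_off r c : r != c -> ~~ ((s1 r <= s1 c)%N && (s2 c < s2 r)%N) -> Td r c = 0.
Proof.
move=> ne h; rewrite mxE; have [_ h2] := inv (s1 c) ((q (s1 c)).-1 - s2 c) r.
have := s2lt c => hc.
apply: h2.
  apply/negP => /andP[/eqP e1 /eqP e2]; move/negP: ne; apply.
  rewrite eq_idx e1 eqxx /=; apply/eqP; lia.
apply/negP => /andP[h1 h3]; move/negP: h; apply; rewrite h1 /=; lia.
Qed.

Lemma Td_lastc i r : Td r (lastc qpos i) = Bd r i.
Proof.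
by rewrite mxE /lastc s1_mk s2_mk subnn expr0 mul1mx.
Qed.

Lemma Td_prev r c (h : ((s2 c).-1 < q (s1 c))%N) :
  (0 < s2 c)%N -> Td r (mk h) = (Aj (s1 c) *m Td) r c.
Proof.
move=> hc; rewrite mxE s1_mk s2_mk.
have -> : ((q (s1 c)).-1 - (s2 c).-1 = ((q (s1 c)).-1 - s2 c).+1)%N.
  have := s2lt c; lia.
rewrite exprS -mulmxE -mulmxA [RHS]mxE [LHS]mxE; apply: eq_bigr => s _.
by rewrite [Td s c]mxE.
Qed.

Definition Fp : 'M[R]_(md, n) :=
  \matrix_(i, c) (if (s2 c == 0%N) || (i <= s1 c)%N then 0 else (F *m Td) i c).

Lemma key r c : (0 < s2 c)%N ->
  ((J + Bd *m F) *m Td) r c = (Td *m J) r c + (Bd *m Fp) r c.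
Proof.
move=> hc.
have h : ((s2 c).-1 < q (s1 c))%N by have := s2lt c; lia.
rewrite (mulJr_prev _ _ h hc) (Td_prev _ h hc) /Aj !mulmxDl !addE -!mulmxA.
rewrite !(mulB qpos) -addrA; congr (_ + _); rewrite -mulrDr; congr (_ * _).
rewrite [(Fle _ *m _) _ _]mxE [(Fp) _ _]mxE [(F *m _) _ _]mxE.
have -> : (s2 c == 0%N) = false by apply/negbTE; rewrite -lt0n.
rewrite /=; case: leqP => hi.
  rewrite addr0; apply: eq_bigr => s _; by rewrite [Fle _ _ _]mxE hi.
rewrite [X in _ = X + _]big1 ?add0r // => s _; by rewrite [Fle _ _ _]mxE leqNgt hi /= mul0r.
Qed.


Definition Nm : 'M[R]_n := Td - 1%:M.

Lemma Nm0 r c : ~~ (s2 c < s2 r)%N -> Nm r c = 0.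
Proof.
have NmE : Nm r c = Td r c + - (r == c)%:R.
  by rewrite /Nm addE; congr (_ + _); rewrite !mxE.
move=> h; rewrite NmE.
case: (eqVneq r c) => [->|ne]; first by rewrite Td_diag subrr.
rewrite Td_off ?add0r ?oppr0 //.
by rewrite negb_and h orbT.
Qed.

Lemma Npow m r c : (s2 r < s2 c + m)%N -> (Nm ^+ m) r c = 0.
Proof.
elim: m r c => [|m IH] r c.
  rewrite addn0 expr0 => h; rewrite mxE.
  case: (eqVneq r c) => [e|//]; by rewrite e ltnn in h.
move=> h; rewrite exprS -mulmxE mxE big1 // => s _.
case: (ltnP (s2 s) (s2 r)) => hs.
  by rewrite IH ?mulr0 //; lia.
by rewrite Nm0 ?mul0r // -leqNgt.
Qed.

Lemma s2_le_n (r : 'I_n) : (s2 r < n)%N.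
Proof. have := ltn_ord r; rewrite [X in (X < _)%N -> _]rectE; lia. Qed.

Lemma Td_unit : Td \in unitmx.
Proof.
have Nn : Nm ^+ n = 0.
  apply/matrixP => r c; rewrite Npow ?mxE //; have := s2_le_n r; lia.
have e := subrX1 (- Nm) n.
rewrite exprNn Nn mulr0 sub0r in e.
have : Td *m (\sum_(i < n) (- Nm) ^+ i) = 1%:M.
  rewrite mulmxE; apply: oppr_inj; rewrite e -mulNr; congr (_ * _).
  by rewrite /Nm opprB addrAC subrr add0r.
by move=> /mulmx1_unit [].
Qed.


Lemma CdTd : Cd *m Td = Cd.
Proof.
apply/matrixP => i c; rewrite (mulCdE qpos) (CblkE qpos).
case: (eqVneq (mk (qpos i)) c) => [<-|ne].
  by rewrite Td_diag s1_mk s2_mk !eqxx.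
rewrite Td_off //; last by rewrite s2_mk ltn0 andbF.
case: (eqVneq (s1 c) i) => [e|] //=; case: (eqVneq (s2 c) 0%N) => [e'|//].
by move/negP: ne; case; rewrite eq_idx s1_mk s2_mk e e' !eqxx.
Qed.

Lemma TdBd : Td *m Bd = Bd.
Proof. by apply/matrixP => r i; rewrite (mulBr qpos) Td_lastc. Qed.

Lemma invTdBd : invmx Td *m Bd = Bd.
Proof. by rewrite -{1}TdBd mulKmx // Td_unit. Qed.

Variable H : 'M[R]_(n, md).
Definition Mres : 'M[R]_n :=
  invmx Td *m (J + Bd *m F + H *m Cd) *m Td - J - Bd *m Fp.
Definition Hp : 'M[R]_(n, md) := Mres *m Cd^T.

Lemma Mres0 r t : (0 < s2 t)%N -> Mres r t = 0.
Proof.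
move=> ht.
have -> : Mres = invmx Td *m ((J + Bd *m F + H *m Cd) *m Td - Td *m J - Bd *m Fp).
  by rewrite /Mres !mulmxBr !mulmxA mulVmx ?Td_unit // mul1mx invTdBd.
rewrite mxE big1 // => s _.
have oppE : forall (A : 'M[R]_n) i j, (- A) i j = - A i j by move=> A i j; rewrite mxE.
rewrite !addE !oppE mulmxDl -(mulmxA H) CdTd addE (mulCr qpos).
have -> : (s2 t == 0%N) = false by apply/negbTE; rewrite -lt0n.
have Z : forall x y : R, x + y - x - y = 0 by move=> x y; rewrite (addrC x) addrK subrr.
by rewrite (_ : false%:R = 0) // mul0r addr0 key // Z mulr0.
Qed.

Lemma Mres_eq : Mres = Hp *m Cd.
Proof.
apply/matrixP => r t; rewrite /Hp (mulCr qpos).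
have -> : (Mres *m Cd^T) r (s1 t) = Mres r (mk (qpos (s1 t))).
  by rewrite -[Mres *m _]trmxK trmx_mul trmxK mxE (mulCdE qpos) mxE.
case: (eqVneq (s2 t) 0%N) => h.
  rewrite mul1r; congr (Mres r _); apply/eqP; by rewrite eq_idx s1_mk s2_mk h !eqxx.
by rewrite mul0r Mres0 // lt0n.
Qed.

Lemma transf :
  invmx Td *m (J + Bd *m F + H *m Cd) *m Td = J + Bd *m Fp + Hp *m Cd.
Proof.
rewrite -Mres_eq /Mres.
have Z : forall x j b : 'M[R]_n, x = j + b + (x - j - b).
  by move=> x j b; rewrite addrC -addrA (addrC j) addKr subrK.
exact: Z.
Qed.



Lemma Fp_struct : Fdd_structured Fp.
Proof.
move=> i j c hr hh; rewrite mxE.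
have [e1 e2] := s_range hr.
case: hh => [hij|hc].
  by rewrite e1 hij orbT.
by rewrite e2 hc subnn eqxx.
Qed.

End Constr.


Section TsS.
Variables (R : realFieldType) (na nb nc nd : nat).

Lemma Ts_mul (T1 T2 : 'M[R]_nd) :
  Ts_mx na nb nc T1 *m Ts_mx na nb nc T2 = Ts_mx na nb nc (T1 *m T2).
Proof.
by rewrite /Ts_mx !mulmx_block !mulmx1 !mul1mx !mulmx0 !mul0mx !addr0 !add0r.
Qed.

Lemma Ts_1 : Ts_mx na nb nc (1%:M : 'M[R]_nd) = 1%:M.
Proof. by rewrite /Ts_mx -!scalar_mx_block. Qed.

Lemma Ts_inv (T : 'M[R]_nd) : T \in unitmx ->
  invmx (Ts_mx na nb nc T) = Ts_mx na nb nc (invmx T).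
Proof.
move=> hT.
have h : Ts_mx na nb nc T *m Ts_mx na nb nc (invmx T) = 1%:M.
  by rewrite Ts_mul mulmxV // Ts_1.
have [u _] := mulmx1_unit h.
by rewrite -[RHS](mulKmx u) h mulmx1.
Qed.

Lemma Ts_col (T : 'M[R]_nd) (xa : 'cV_na) (xb : 'cV_nb) (xc : 'cV_nc) (xd : 'cV_nd) :
  Ts_mx na nb nc T *m col4 xa xb xc xd = col4 xa xb xc (T *m xd).
Proof.
by rewrite /Ts_mx /col4 /col3 !mul_block_col !mul1mx !mul0mx !addr0 !add0r.
Qed.
End TsS.

Theorem lemma2 (R : realFieldType) (na nc m0 mc pb md : nat)
  (l : 'I_pb -> nat) (q : 'I_md -> nat)
  (A : 'M[R]_(na + \sum_i l i + nc + \sum_i q i))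
  (B : 'M[R]_(na + \sum_i l i + nc + \sum_i q i, m0 + md + mc))
  (C : 'M[R]_(m0 + md + pb, na + \sum_i l i + nc + \sum_i q i))
  (D : 'M[R]_(m0 + md + pb, m0 + md + mc))
  (P : scb_data R na nc m0 mc l q) :
  (forall i, (0 < l i)%N) ->
  (forall i, (0 < q i)%N) ->
  (forall i j : 'I_md, (i <= j)%N -> (q j <= q i)%N) ->
  \rank D = m0 ->
  \rank (col_mx B D) = (m0 + md + mc)%N ->
  \rank (row_mx C D) = (m0 + md + pb)%N ->
  in_SCB A B C D P ->
  exists Td : 'M[R]_(\sum_i q i),
    [/\ Td \in unitmx,
        (let Ts := Ts_mx na (\sum_i l i) nc Td in
         exists P' : scb_data R na nc m0 mc l q,
           in_SCB (invmx Ts *m A *m Ts) (invmx Ts *m B) (C *m Ts) D P'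
           /\ Fdd_structured (Fdd P')),
        Cblk R q *m Td = Cblk R q
      & invmx Td *m Bblk R q = Bblk R q].
Proof.
move=> _ qpos qmono _ _ _ HS.
set T := Td (Fdd P).
have Tu : T \in unitmx := Td_unit qpos qmono (Fdd P).
have CT : Cblk R q *m T = Cblk R q := CdTd qpos qmono (Fdd P).
exists T; split => //; last exact: invTdBd qpos qmono (Fdd P).
move=> Ts.
exists (@SCBData R na nc m0 mc pb md l q (Aa P) (Hab P) (Had P) (B0a P) (Hbb P)
  (Hbd P) (B0b P) (Fca P) (Hcb P) (Ac P) (Hcd P) (B0c P) (Bc P) (Fda P) (Fdb P)
  (Fdc P) (Fp (Fdd P)) (Hp (Fdd P) (Hdd P)) (invmx T *m B0d P)
  (C0a P) (C0b P) (C0c P) (C0d P *m T)).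
split; last exact: Fp_struct.
move=> xa xb xc xd u0 ud uc /=.
have [H1 H2] := HS xa xb xc (T *m xd) u0 ud uc.
rewrite /= (mulmxA (Cblk R q)) CT (mulmxA (C0d P)) in H1 H2.
split.
  by rewrite -mulmxA Ts_col H1.
rewrite -(mulmxA (invmx Ts *m A)) Ts_col -(mulmxA (invmx Ts) A) -(mulmxA (invmx Ts) B).
rewrite -(mulmxDr (invmx Ts)) H2 /Ts Ts_inv // Ts_col.
congr col4.
rewrite !mulmxDr !mulmxA (invTdBd qpos qmono).
by rewrite (transf qpos qmono).

Qed.
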